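(* Let $F\colon\Omega\to\Omega$ be a piecewise translation in $\mathbb{R}^d$ with $m=d+1$ branches whose translation vectors $v_0,\dots,v_d$ have the property that any $d$ of them are linearly independent. Then there is a unique tuple $(\alpha_0,\dots,\alpha_d)\in\mathbb{R}^{d+1}$ with $\sum_{i=0}^d\alpha_iv_i=0$ and $\sum_{i=0}^d\alpha_i=1$, and it satisfies $\alpha_i>0$ for all $i$.
   Context: A region is a compact subset of $\mathbb{R}^d$ which equals the closure of its interior. A piecewise translation with $m$ branches: $\Omega\subset\mathbb{R}^d$ is a region, $\Omega=P_0\cup\dots\cup P_{m-1}$ with each $P_i$ a region, distinct $P_i$ intersecting only in boundaries, $\mathrm{Leb}(\partial P_i)=0$; vectors $v_i$ satisfy $x+v_i\in\Omega$ for $x\in P_i$; $i(x)$ is an index with $x\in P_{i(x)}$ (boundary ambiguity resolved by a fixed measurable rule), and $F(x)=x+v_{i(x)}$. *)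

(* Defs.v *)
From Stdlib Require Import Reals.
From mathcomp Require Import ssreflect ssrbool ssrnat seq fintype.

Local Open Scope R_scope.

Definition Vec (d : nat) := 'I_d -> R.

Definition vadd {d : nat} (x y : Vec d) : Vec d := fun k => x k + y k.

(* Open sup-norm ball (same topology as Euclidean). *)
Definition ball {d : nat} (x : Vec d) (r : R) (y : Vec d) : Prop :=
  forall k : 'I_d, Rabs (y k - x k) < r.

Definition interior {d : nat} (S : Vec d -> Prop) (x : Vec d) : Prop :=
  exists r, 0 < r /\ forall y, ball x r y -> S y.

Definition closure {d : nat} (S : Vec d -> Prop) (x : Vec d) : Prop :=
  forall r, 0 < r -> exists y, ball x r y /\ S y.

Definition boundary {d : nat} (S : Vec d -> Prop) (x : Vec d) : Prop :=
  closure S x /\ ~ interior S x.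

Definition is_closed {d : nat} (S : Vec d -> Prop) : Prop :=
  forall x, closure S x -> S x.

Definition is_bounded {d : nat} (S : Vec d -> Prop) : Prop :=
  exists M, forall x, S x -> forall k : 'I_d, Rabs (x k) <= M.

(* Compact subsets of R^d (Heine-Borel). *)
Definition is_compact {d : nat} (S : Vec d -> Prop) : Prop :=
  is_closed S /\ is_bounded S.

Definition region {d : nat} (S : Vec d -> Prop) : Prop :=
  is_compact S /\ forall x, S x <-> closure (interior S) x.

Definition box_vol {d : nat} (a b : Vec d) : R :=
  foldr Rmult 1 (map (fun k => b k - a k) (enum 'I_d)).

Definition leb_null {d : nat} (S : Vec d -> Prop) : Prop :=
  forall eps, 0 < eps ->
    exists a b : nat -> Vec d,
      (forall n (k : 'I_d), a n k <= b n k) /\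
      (forall x, S x -> exists n, forall k : 'I_d, a n k <= x k <= b n k) /\
      (forall N, sum_f_R0 (fun n => box_vol (a n) (b n)) N <= eps).

(* Piecewise translation with m branches P 0 .. P (m-1), vectors v i,
   and branch-index rule idx (F x = x + v (idx x)). *)
Definition piecewise_translation (d m : nat) (Omega : Vec d -> Prop)
    (P : nat -> Vec d -> Prop) (v : nat -> Vec d) (idx : Vec d -> nat) : Prop :=
  region Omega /\
  (forall i, (i < m)%nat -> region (P i)) /\
  (forall x, Omega x <-> exists i, (i < m)%nat /\ P i x) /\
  (forall i j x, (i < m)%nat -> (j < m)%nat -> i <> j -> P i x -> P j x ->
       boundary (P i) x /\ boundary (P j) x) /\
  (forall i, (i < m)%nat -> leb_null (boundary (P i))) /\
  (forall i x, (i < m)%nat -> P i x -> Omega (vadd x (v i))) /\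
  (forall x, Omega x -> (idx x < m)%nat /\ P (idx x) x).

Definition any_d_independent (d : nat) (v : nat -> Vec d) : Prop :=
  forall j, (j <= d)%nat ->
    forall c : nat -> R,
      (forall k : 'I_d,
         sum_f_R0 (fun i => if Nat.eqb i j then 0 else c i * v i k) d = 0) ->
      forall i, (i <= d)%nat -> i <> j -> c i = 0.

Definition affine_relation (d : nat) (v : nat -> Vec d) (a : nat -> R) : Prop :=
  (forall k : 'I_d, sum_f_R0 (fun i => a i * v i k) d = 0) /\
  sum_f_R0 a d = 1.

(* Main.v *)
Require Import Defs.
From Stdlib Require Import Reals Classical.
From mathcomp Require Import ssreflect ssrbool ssrnat seq fintype.
From mathcomp Require Import all_boot all_order all_algebra.
From mathcomp Require Import Rstruct.
From mathcomp Require Import ring lra zify.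
Import Order.TTheory GRing.Theory Num.Theory.
Local Open Scope ring_scope.

Definition ell {d : nat} (w : 'I_d -> R) (x : Vec d) : R := \sum_(k < d) w k * x k.

Lemma ell_add {d} (w : 'I_d -> R) x y : ell w (vadd x y) = ell w x + ell w y.
Proof. by rewrite /ell -big_split; apply eq_bigr => k _; rewrite /vadd /= mulrDr. Qed.

Lemma pos_lb (n : nat) (f : nat -> R) :
  (forall i, (i <= n)%N -> 0 < f i) -> exists e, 0 < e /\ forall i, (i <= n)%N -> e <= f i.
Proof.
elim: n => [|n IH] H.
  exists (f 0%N); split; first exact: H.
  by move=> i; rewrite leqn0 => /eqP ->.
have [e [He He']] := IH (fun i Hi => H i (leqW Hi)).
exists (Num.min e (f n.+1)); split.
  by rewrite lt_min He H.
move=> i; rewrite leq_eqVlt => /orP [/eqP ->|Hi].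
  by rewrite ge_min lexx orbT.
by rewrite ltnS in Hi; rewrite ge_min He'.
Qed.

Lemma dynamics d Omega P v idx :
  piecewise_translation d (d.+1) Omega P v idx -> (exists x, Omega x) ->
  forall w : 'I_d -> R, ~ (forall i, (i <= d)%N -> 0 < ell w (v i)).
Proof.
move=> [[[_ [M HM]] _] [_ [_ [_ [_ [Hv Hidx]]]]]] [x0 Hx0] w Hpos.
have [e [He He']] := @pos_lb d (fun i => ell w (v i)) Hpos.
pose F (x : Vec d) := vadd x (v (idx x)).
have HF : forall x, Omega x -> Omega (F x).
  move=> x Hx; have [H1 H2] := Hidx x Hx; exact: Hv.
pose C := \sum_(k < d) `|w k| * `|M|.
have HC : forall x, Omega x -> `|ell w x| <= C.
  move=> x Hx; rewrite /ell; apply: le_trans (ler_norm_sum _ _ _) _.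
  apply: ler_sum => k _; rewrite normrM ler_wpM2l //.
  apply: le_trans (ler_norm M); rewrite -RabsE; apply/RleP; exact: HM.
have HC0 : 0 <= C by apply: sumr_ge0 => k _; rewrite mulr_ge0.
have Hit : forall n, Omega (iter n F x0) /\ ell w x0 + n%:R * e <= ell w (iter n F x0).
  elim=> [|n [IH1 IH2]]; first by split => //=; rewrite mul0r addr0.
  split; first by apply: HF.
  rewrite iterS /F ell_add.
  have : e <= ell w (v (idx (iter n F x0))).
    by apply: He'; have [H1 _] := Hidx _ IH1; move: H1; rewrite ltnS.
  move: IH2; rewrite -[n.+1]addn1 natrD mulrDl mul1r; lra.
pose n := Num.bound ((C + C) / e).
have Hn : (C + C) / e < n%:R by apply: archi_boundP; apply: divr_ge0; [exact: addr_ge0 | exact: ltW].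
have [H1 H2] := Hit n.
have := HC _ H1; have := HC _ Hx0.
have : C + C < n%:R * e by rewrite -ltr_pdivrMr.
move: H2; set a := ell w x0; set b := ell w (iter n F x0).
move=> H2 H3 Ha Hb.
have := ler_norm a; have := ler_normr b.
have : - a <= `|a| by rewrite -normrN ler_norm.
have : b <= `|b| by rewrite ler_norm.
lra.
Qed.

Definition Sm (n : nat) (f : nat -> R) : R := \sum_(i < n.+1) f i.

Lemma sfE f n : sum_f_R0 f n = Sm n f.
Proof. by rewrite sum_f_R0E big_mkord. Qed.

Lemma L_indep d (v : nat -> Vec d) : any_d_independent d v ->
  forall j, (j <= d)%N -> forall c : nat -> R, c j = 0 ->
  (forall k, Sm d (fun i => c i * v i k) = 0) -> forall i, (i <= d)%N -> c i = 0.
Proof.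
move=> Hind j Hj c Hcj Hrel i Hi.
case: (eqVneq i j) => [->//|Hij].
apply: (Hind j Hj c) => //; last by apply/eqP.
move=> k; rewrite sfE; transitivity (Sm d (fun i => c i * v i k)); last exact: Hrel.
apply: eq_bigr => l _.
by case: Nat.eqb_spec => [->|//]; rewrite Hcj mul0r.
Qed.

Definition Bmat d (v : nat -> Vec d) (j : nat) : 'M[R]_d :=
  \matrix_(i < d, k < d) v (bump j i) k.
Arguments Bmat {d}.

Lemma lift_inord n (j : nat) (i : 'I_n) : (j < n.+1)%N ->
  nat_of_ord (lift (inord j : 'I_n.+1) i) = bump j i.
Proof. by move=> Hj; rewrite /= inordK. Qed.

Lemma L_unit d (v : nat -> Vec d) : any_d_independent d v ->
  forall j, (j <= d)%N -> Bmat v j \in unitmx.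
Proof.
move=> Hind j Hj; rewrite -row_free_unit; apply: inj_row_free => u Hu.
case: d v Hind j Hj u Hu => [|n] v Hind j Hj u Hu; first by rewrite thinmx0.
pose c (i : nat) : R := if i == j then 0 else u 0 (inord (unbump j i)).
have Hc : forall i : 'I_n.+1, c (bump j i) = u 0 i.
  move=> i; rewrite /c eq_sym (negbTE (neq_bump _ _)) bumpK.
  by congr (u 0 _); apply: val_inj; rewrite /= inordK.
have Hrel : forall k, Sm n.+1 (fun i => c i * v i k) = 0.
  move=> k; rewrite /Sm (bigD1_ord (inord j : 'I_n.+2)) //= inordK ?ltnS //.
  rewrite /c eqxx mul0r add0r.
  transitivity ((u *m Bmat v j) 0 k); last by rewrite Hu mxE.
  rewrite mxE; apply: eq_bigr => i _.
  by rewrite -/(c _) Hc mxE.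
apply/rowP => i; rewrite !mxE -Hc.
apply: (@L_indep _ _ Hind _ Hj) => //; first by rewrite /c eqxx.
by have := ltn_ord (lift (inord j : 'I_n.+2) i); rewrite lift_inord ?ltnS.
Qed.

Lemma L_ell d (v : nat -> Vec d) j : (j <= d)%N -> Bmat v j \in unitmx ->
  exists w : 'I_d -> R, forall i, (i <= d)%N -> i <> j -> ell w (v i) = 1.
Proof.
move=> Hj HB.
case: d v j Hj HB => [|n] v j Hj HB.
  exists (fun _ => 0) => i Hi Hij.
  by exfalso; apply: Hij; move: Hi Hj; rewrite !leqn0 => /eqP -> /eqP ->.
pose x : 'cV[R]_n.+1 := invmx (Bmat v j) *m const_mx 1.
exists (fun k => x k 0) => i Hi Hij.
have Hu : (unbump j i < n.+1)%N.
  move/eqP: Hij => Hij; rewrite /unbump; case: ltnP => H /=; lia.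
have Hi' : i = bump j (Ordinal Hu) by rewrite /= unbumpK //; apply/eqP.
have := mulKVmx HB (const_mx 1 : 'cV[R]_n.+1).
move/(congr1 (fun M : 'cV[R]_n.+1 => M (Ordinal Hu) 0)); rewrite !mxE => <-.
rewrite /ell [in v i]Hi'; apply: eq_bigr => k _; rewrite mxE mulrC.
by rewrite [in RHS]mxE.
Qed.

Lemma L_c d (v : nat -> Vec d) : Bmat v 0 \in unitmx ->
  exists c : nat -> R, c 0%N = -1 /\ forall k, Sm d (fun i => c i * v i k) = 0.
Proof.
move=> HB.
case: d v HB => [|n] v HB.
  by exists (fun _ => -1); split => // - [].
pose beta : 'rV[R]_n.+1 := (\row_k v 0%N k) *m invmx (Bmat v 0).
exists (fun i => if i is i'.+1 then beta 0 (inord i') else -1); split => // k.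
rewrite /Sm big_ord_recl /=.
have Hb : v 0%N k = (beta *m Bmat v 0) 0 k by rewrite mulmxKV // mxE.
rewrite [in -1 * _]Hb mulN1r addrC; apply/eqP; rewrite subr_eq0; apply/eqP.
rewrite mxE.
apply: eq_bigr => i _; rewrite mxE.
have -> : bump 0 i = (lift ord0 i : nat) by [].
rewrite lift0 /= add0n inord_val [Bmat v 0 i k]mxE /beta [in RHS]mxE.
by [].
Qed.

Arguments L_unit {d v}. Arguments L_c {d v}. Arguments L_ell {d v j}.
Arguments dynamics {d Omega P v idx}.
Delimit Scope R_scope with R.

Theorem proposition2p5 (d : nat) (Omega : Vec d -> Prop)
    (P : nat -> Vec d -> Prop) (v : nat -> Vec d) (idx : Vec d -> nat) :
  piecewise_translation d (d.+1) Omega P v idx ->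
  (exists x, Omega x) ->
  any_d_independent d v ->
  exists a : nat -> R,
    affine_relation d v a /\
    (forall i, (i <= d)%nat -> (0 < a i)%R) /\
    (forall b : nat -> R, affine_relation d v b ->
       forall i, (i <= d)%nat -> b i = a i).
Proof.
move=> HPT Hne Hind.
have [c [Hc0 Hc]] := L_c (L_unit Hind 0%N (leq0n d)).
have HcN : forall j, (j <= d)%N -> c j != 0.
  move=> j Hj; apply/eqP => Hcj.
  have := @L_indep d v Hind j Hj c Hcj Hc 0%N (leq0n d).
  by rewrite Hc0 => /eqP; rewrite oppr_eq0 oner_eq0.
pose s := Sm d c.
have Hsj : forall j, (j <= d)%N -> 1 <= s / c j.
  move=> j Hj; have [w Hw] := L_ell Hj (L_unit Hind j Hj).
  have Hlj : ell w (v j) <= 0.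
    have H := dynamics HPT Hne w.
    case: (lerP (ell w (v j)) 0) => // Hlt; exfalso; apply: H => i Hi.
    case: (eqVneq i j) => [->//|Hij]; rewrite Hw // ?ltr01 //; exact/eqP.
  have E1 : \sum_(k < d) w k * Sm d (fun i => c i * v i k) = 0.
    by rewrite big1 // => k _; rewrite Hc mulr0.
  have E2 : \sum_(k < d) w k * Sm d (fun i => c i * v i k) =
            Sm d (fun i => c i * ell w (v i)).
    rewrite /Sm /ell.
    under eq_bigr do rewrite mulr_sumr.
    rewrite exchange_big /=; apply: eq_bigr => i _.
    rewrite mulr_sumr; apply: eq_bigr => k _; ring.
  have E3 : Sm d (fun i => c i * ell w (v i)) = s + c j * (ell w (v j) - 1).
    have -> : Sm d (fun i => c i * ell w (v i)) =
              s + Sm d (fun i => c i * (ell w (v i) - 1)).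
      by rewrite /s /Sm -big_split /=; apply: eq_bigr => i _; ring.
    congr (_ + _).
    rewrite /Sm (bigD1_ord (inord j : 'I_d.+1)) //= inordK ?ltnS //.
    rewrite big1 ?addr0 // => i _.
    rewrite Hw ?subrr ?mulr0 //.
      by have := ltn_ord (lift (inord j : 'I_d.+1) i); rewrite lift_inord ?ltnS.
    by apply/eqP; rewrite eq_sym neq_bump.
  have Hid : s + c j * (ell w (v j) - 1) = 0 by rewrite -E3 -E2 E1.
  have Hcj := HcN j Hj.
  have Hs : s = c j * (1 - ell w (v j)).
    by move: Hid; rewrite !mulrBr !mulr1; lra.
  by rewrite Hs [c j * _]mulrC mulfK //; lra.
have Hs0 : s != 0.
  by apply/eqP => H; have := Hsj 0%N (leq0n d); rewrite H mul0r; lra.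
have Hsum : Sm d c = s by [].
exists (fun i => c i / s); split; [|split].
- split.
  + move=> k; rewrite sfE R0E.
    transitivity (s^-1 * Sm d (fun i => c i * v i k)); last by rewrite Hc mulr0.
    rewrite /Sm mulr_sumr; apply: eq_bigr => i _ /=; rewrite RmultE; ring.
  + by rewrite sfE R1E /Sm -mulr_suml -/(Sm d c) divff.
- move=> i Hi; apply/RltP; rewrite R0E -invf_div invr_gt0.
  by have := Hsj i Hi; lra.
- move=> b [Hbr Hbs] i Hi.
  pose t := b 0%N - c 0%N / s.
  pose e n := b n - c n / s + t * c n.
  have He0 : e 0%N = 0 by rewrite /e /t Hc0; ring.
  have Herel : forall k, Sm d (fun n => e n * v n k) = 0.
    move=> k; have := Hbr k; rewrite sfE => Hb'.
    transitivity (Sm d (fun n => b n * v n k) - s^-1 * Sm d (fun n => c n * v n k)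
                  + t * Sm d (fun n => c n * v n k)).
      rewrite /Sm !mulr_sumr -sumrB -big_split; apply: eq_bigr => n _ /=.
      rewrite /e; ring.
    by rewrite Hc !mulr0 addr0 subr0; exact: Hb'.
  have Hall := @L_indep d v Hind 0%N (leq0n d) e He0 Herel.
  have Ht : t = 0.
    have H0 : Sm d e = 0 by rewrite /Sm big1 // => n _; apply: Hall; rewrite -ltnS.
    have Hb1 : Sm d b = 1 by rewrite -sfE; exact: Hbs.
    have : Sm d e = Sm d b - s^-1 * s + t * s.
      rewrite /Sm /s /Sm !mulr_sumr -sumrB -big_split; apply: eq_bigr => n _ /=.
      rewrite /e; ring.
    rewrite H0 Hb1 mulVf // subrr add0r => /esym /eqP.
    by rewrite mulf_eq0 (negbTE Hs0) orbF => /eqP.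
  move: (Hall i Hi); rewrite /e Ht mul0r addr0 => /eqP.
  by rewrite subr_eq0 => /eqP.
Qed.
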